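(* Let $m\geq2$ be an integer. There is a constant $C_{\mathbb{K},m}\geq1$, not depending on $n$, such that for all $n\ge1$ and all $m$-homogeneous polynomials $P(x)=\sum_{|\alpha|=m}a_\alpha\mathbf{x}^\alpha$ on $\ell_m^n$, \[ \max_{|\alpha|=m}|a_\alpha|\leq C_{\mathbb{K},m}\|P\|, \] and the optimal such constants satisfy $C_{\mathbb{R},m}\le(\sqrt2)^{m-1}m^m$ and $C_{\mathbb{C},m}\le\big(\frac{2}{\sqrt\pi}\big)^{m-1}m^m$. Moreover, for every $r<\infty$ there is no constant $C$ independent of $n$ such that $\big(\sum_{|\alpha|=m}|a_\alpha|^r\big)^{1/r}\le C\|P\|$ for all $m$-homogeneous polynomials $P$ on $\ell_m^n$ and all $n$.
   Context: $\mathbb{K}$ denotes $\mathbb{R}$ or $\mathbb{C}$. For $\alpha\in\mathbb{N}^n$, $|\alpha|=\alpha_1+\cdots+\alpha_n$ and $\mathbf{x}^\alpha=x_1^{\alpha_1}\cdots x_n^{\alpha_n}$. $\ell_m^n$ is $\mathbb{K}^n$ with the $m$-norm, and $\|P\|=\sup\{|P(x)|:\|x\|_m\le1\}$. *)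

(* Defs.v *)
From Stdlib Require Import Reals List.
Import ListNotations.
Open Scope R_scope.

(* Scalars: complex numbers as pairs (re, im). The real field is the
   subset with im = 0 (selected by the boolean [isReal]). *)
Definition Cx := (R * R)%type.
Definition Cadd (z w : Cx) : Cx := (fst z + fst w, snd z + snd w).
Definition Cmul (z w : Cx) : Cx :=
  (fst z * fst w - snd z * snd w, fst z * snd w + snd z * fst w).
Definition C0 : Cx := (0, 0).
Definition C1 : Cx := (1, 0).
Fixpoint Cpow (z : Cx) (k : nat) : Cx :=
  match k with O => C1 | S k => Cmul z (Cpow z k) end.
Definition Cabs (z : Cx) : R := sqrt (fst z * fst z + snd z * snd z).

Definition inK (isReal : bool) (z : Cx) : Prop :=
  if isReal then snd z = 0 else True.

(* multi-indices alpha in N^n with |alpha| = m, as lists of length n *)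
Fixpoint multi_indices (n m : nat) : list (list nat) :=
  match n with
  | O => match m with O => [ [] ] | S _ => [] end
  | S n' => flat_map (fun k => map (cons k) (multi_indices n' (m - k)))
                     (seq 0 (S m))
  end.

Fixpoint monomial_from (x : nat -> Cx) (i : nat) (alpha : list nat) : Cx :=
  match alpha with
  | [] => C1
  | k :: al => Cmul (Cpow (x i) k) (monomial_from x (S i) al)
  end.
Definition monomial (x : nat -> Cx) (alpha : list nat) : Cx :=
  monomial_from x 0 alpha.

Definition hpoly_eval (n m : nat) (a : list nat -> Cx) (x : nat -> Cx) : Cx :=
  fold_right Cadd C0 (map (fun al => Cmul (a al) (monomial x al))
                          (multi_indices n m)).

Definition in_unit_ball (isReal : bool) (n m : nat) (x : nat -> Cx) : Prop :=
  (forall i, (i < n)%nat -> inK isReal (x i)) /\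
  sum_f_R0 (fun i => Cabs (x i) ^ m) (pred n) <= 1.

Definition is_poly_norm (isReal : bool) (n m : nat) (a : list nat -> Cx)
    (N : R) : Prop :=
  is_lub (fun y => exists x, in_unit_ball isReal n m x /\
                             y = Cabs (hpoly_eval n m a x)) N.

Definition coeffs_in_K (isReal : bool) (a : list nat -> Cx) : Prop :=
  forall al, inK isReal (a al).

Definition coeff_bound (isReal : bool) (m : nat) (C : R) : Prop :=
  forall (n : nat) (a : list nat -> Cx) (N : R),
    (1 <= n)%nat -> coeffs_in_K isReal a -> is_poly_norm isReal n m a N ->
    forall al, In al (multi_indices n m) -> Cabs (a al) <= C * N.

(* x^y for x >= 0, y > 0, with 0^y = 0 *)
Definition rpow (x y : R) : R := if Req_EM_T x 0 then 0 else Rpower x y.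

Definition coeff_lr_norm (n m : nat) (r : R) (a : list nat -> Cx) : R :=
  rpow (fold_right Rplus 0 (map (fun al => rpow (Cabs (a al)) r)
                                (multi_indices n m))) (/ r).

(* Main.v *)
Require Import Defs.
From Stdlib Require Import Reals List Lia Lra FunctionalExtensionality Factorial.
Import ListNotations.
Open Scope R_scope.

Fixpoint peval (cs : list R) (t : R) : R :=
  match cs with [] => 0 | c :: cs' => c + t * peval cs' t end.

Definition PolyLt (d : nat) (f : R -> R) : Prop :=
  exists cs, (length cs <= d)%nat /\ forall t, f t = peval cs t.

Lemma P_zero f t : PolyLt 0 f -> f t = 0.
Proof. intros [cs [Hl Hf]]. destruct cs; simpl in Hl; [|lia]. rewrite Hf; reflexivity. Qed.

Lemma P_mono d d' f : (d <= d')%nat -> PolyLt d f -> PolyLt d' f.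
Proof. intros H [cs [Hl Hf]]. exists cs; split; [lia|auto]. Qed.

Lemma P_ext d f g : (forall t, f t = g t) -> PolyLt d f -> PolyLt d g.
Proof. intros H [cs [Hl Hf]]. exists cs; split; auto. intros t; rewrite <- H; auto. Qed.

Fixpoint padd (cs ds : list R) : list R :=
  match cs, ds with
  | [], _ => ds
  | _, [] => cs
  | c :: cs', d :: ds' => (c + d) :: padd cs' ds'
  end.

Lemma padd_eval cs ds t : peval (padd cs ds) t = peval cs t + peval ds t.
Proof.
  revert ds; induction cs as [|c cs IH]; intros ds; simpl. lra.
  destruct ds as [|d ds]; simpl. lra. rewrite IH. ring.
Qed.

Lemma padd_len cs ds d : (length cs <= d)%nat -> (length ds <= d)%nat -> (length (padd cs ds) <= d)%nat.
Proof.
  revert ds d; induction cs as [|c cs IH]; intros ds d H1 H2; simpl; auto.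
  destruct ds as [|e ds]; simpl in *; auto.
  destruct d; [lia|]. assert (length (padd cs ds) <= d)%nat by (apply IH; lia). lia.
Qed.

Lemma P_add d f g : PolyLt d f -> PolyLt d g -> PolyLt d (fun t => f t + g t).
Proof.
  intros [cs [Hl Hf]] [ds [Hl' Hg]]. exists (padd cs ds). split. apply padd_len; auto.
  intros t. rewrite padd_eval, Hf, Hg. reflexivity.
Qed.

Lemma P_scal d c f : PolyLt d f -> PolyLt d (fun t => c * f t).
Proof.
  intros [cs [Hl Hf]]. exists (map (Rmult c) cs). rewrite length_map. split; auto.
  intros t. rewrite Hf. clear Hf Hl. induction cs; simpl. ring. rewrite <- IHcs. ring.
Qed.

Lemma P_sub d f g : PolyLt d f -> PolyLt d g -> PolyLt d (fun t => f t - g t).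
Proof.
  intros H1 H2. apply (P_ext d (fun t => f t + (-1) * g t)). intros; ring.
  apply P_add; auto. apply P_scal; auto.
Qed.

Lemma P_mulX d f : PolyLt d f -> PolyLt (S d) (fun t => t * f t).
Proof.
  intros [cs [Hl Hf]]. exists (0 :: cs). simpl. split. lia. intros t; rewrite Hf; ring.
Qed.

Lemma P_const c : PolyLt 1 (fun _ => c).
Proof. exists [c]. simpl. split. lia. intros; ring. Qed.

Lemma P_0 d : PolyLt d (fun _ => 0).
Proof. exists []. simpl. split. lia. auto. Qed.

Lemma P_shift_cs c cs : PolyLt (length cs) (fun t => peval cs (t + c)).
Proof.
  induction cs as [|c0 cs IH]; simpl.
  - apply P_0.
  - apply (P_ext _ (fun t => ((fun _ => c0) t + t * peval cs (t + c)) + c * peval cs (t + c))).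
    intros; ring.
    apply P_add. apply P_add. apply P_mono with 1%nat. lia. apply P_const.
    apply P_mulX. auto.
    apply P_mono with (length cs). lia. apply P_scal. auto.
Qed.

Lemma P_shift d f c : PolyLt d f -> PolyLt d (fun t => f (t + c)).
Proof.
  intros [cs [Hl Hf]]. apply P_mono with (length cs); auto.
  eapply P_ext; [|apply (P_shift_cs c cs)]. intros; simpl; rewrite Hf; reflexivity.
Qed.

Section WithH.
Variable h : R.

Definition Dl (f : R -> R) : R -> R := fun t => f (t + h) - f (t - h).

Lemma P_delta_cs cs : PolyLt (pred (length cs)) (Dl (peval cs)).
Proof.
  induction cs as [|c0 cs IH]; unfold Dl in *; simpl.
  - exists []. simpl; split; [lia|]. intros; ring.
  - destruct cs as [|c1 cs'].
    + exists []. simpl; split; [lia|]. intros; ring.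
    + set (g := peval (c1 :: cs')) in *.
      apply (P_ext _ (fun t => t * (g (t + h) - g (t - h)) + h * (g (t + h) + g (t + - h)))).
      intros t. unfold Rminus. ring.
      apply P_add.
      * replace (length (c1 :: cs')) with (S (pred (length (c1 :: cs')))) by (simpl; lia).
        apply P_mulX. auto.
      * apply P_scal. apply P_add. apply P_shift. exists (c1 :: cs'); split; auto.
        apply P_shift. exists (c1 :: cs'); split; auto.
Qed.

Lemma P_delta d f : PolyLt (S d) f -> PolyLt d (Dl f).
Proof.
  intros [cs [Hl Hf]]. apply P_mono with (pred (length cs)). lia.
  eapply P_ext; [|apply P_delta_cs]. intros t; unfold Dl; rewrite !Hf; reflexivity.
Qed.

Lemma P_pow a : PolyLt (S a) (fun t => t ^ a).
Proof.
  induction a; simpl. apply P_const. apply P_mulX; auto.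
Qed.

Lemma P_shiftpow a c : PolyLt a (fun t => (t + c) ^ a - t ^ a).
Proof.
  induction a. simpl. apply (P_ext _ (fun _ => 0)). intros; ring. apply P_0.
  apply (P_ext _ (fun t => t * ((t + c) ^ a - t ^ a) + c * (((t + c) ^ a - t ^ a) + t ^ a))).
  intros; simpl; ring.
  apply P_add. apply P_mulX; auto. apply P_scal. apply P_add. apply P_mono with a; auto. apply P_pow.
Qed.

Lemma P_shiftpow2 a c : PolyLt a (fun t => (t + c) ^ (S a) - t ^ (S a) - INR (S a) * c * t ^ a).
Proof.
  induction a. simpl. apply (P_ext _ (fun _ => 0)). intros; ring. apply P_0.
  apply (P_ext _ (fun t => t * ((t + c) ^ (S a) - t ^ (S a) - INR (S a) * c * t ^ a)
                           + c * ((t + c) ^ (S a) - t ^ (S a)))).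
  intros t. rewrite !S_INR. simpl. ring.
  apply P_add. apply P_mulX; auto. apply P_scal. apply P_shiftpow.
Qed.

Lemma Dl_pow a : PolyLt a (fun t => Dl (fun u => u ^ (S a)) t - 2 * h * INR (S a) * t ^ a).
Proof.
  apply (P_ext _ (fun t => ((t + h) ^ (S a) - t ^ (S a) - INR (S a) * h * t ^ a)
      - ((t + - h) ^ (S a) - t ^ (S a) - INR (S a) * (- h) * t ^ a))).
  intros t; unfold Dl, Rminus; ring.
  apply P_sub; apply P_shiftpow2.
Qed.

Fixpoint D (a : nat) (f : R -> R) (s : R) : R :=
  match a with O => f s | S a' => D a' (Dl f) s end.

Lemma D_ext a f g s : (forall t, f t = g t) -> D a f s = D a g s.
Proof.
  revert f g; induction a; intros f g H; simpl. auto.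
  apply IHa. intros; unfold Dl; rewrite !H; auto.
Qed.

Lemma D_scal a c f s : D a (fun t => c * f t) s = c * D a f s.
Proof.
  revert f; induction a; intros f; simpl. auto.
  rewrite <- IHa. apply D_ext. intros; unfold Dl; ring.
Qed.

Lemma D_add a f g s : D a (fun t => f t + g t) s = D a f s + D a g s.
Proof.
  revert f g; induction a; intros f g; simpl. auto.
  rewrite <- IHa. apply D_ext. intros; unfold Dl; ring.
Qed.

Lemma D_polylt a f s : PolyLt a f -> D a f s = 0.
Proof.
  revert f; induction a; intros f H; simpl. apply P_zero; auto.
  apply IHa. apply P_delta; auto.
Qed.

Lemma D_pow a s : D a (fun t => t ^ a) s = (2 * h) ^ a * INR (fact a).
Proof.
  induction a. simpl. lra.
  simpl D. destruct (Dl_pow a) as [cs [_ Hc]].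
  rewrite (D_ext a _ (fun t => (2 * h * INR (S a)) * t ^ a + (Dl (fun u => u ^ S a) t - 2 * h * INR (S a) * t ^ a))).
  2: intros t; simpl; lra.
  rewrite D_add, D_scal, IHa, (D_polylt a _ s (Dl_pow a)).
  rewrite fact_simpl, mult_INR. simpl. ring.
Qed.

Lemma D_pow_lt a k s : (k < a)%nat -> D a (fun t => t ^ k) s = 0.
Proof. intros H. apply D_polylt. apply P_mono with (S k); auto. apply P_pow. Qed.

Lemma D_bound a f s M : 0 <= h -> (forall t, Rabs (t - s) <= INR a * h -> Rabs (f t) <= M) ->
  Rabs (D a f s) <= 2 ^ a * M.
Proof.
  intros Hh. revert f M; induction a; intros f M H; simpl.
  - rewrite Rmult_1_l. apply H. rewrite Rminus_diag, Rabs_R0. simpl; lra.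
  - replace (2 * 2 ^ a * M) with (2 ^ a * (2 * M)) by ring. apply IHa. intros t Ht. unfold Dl.
    rewrite S_INR in H.
    assert (H1 := H (t + h)). assert (H2 := H (t - h)).
    assert (Rabs (t + h - s) <= (INR a + 1) * h).
    { replace (t + h - s) with ((t - s) + h) by ring. eapply Rle_trans. apply Rabs_triang.
      rewrite (Rabs_right h) by lra. lra. }
    assert (Rabs (t - h - s) <= (INR a + 1) * h).
    { replace (t - h - s) with ((t - s) + - h) by ring. eapply Rle_trans. apply Rabs_triang.
      rewrite Rabs_Ropp, (Rabs_right h) by lra. lra. }
    unfold Rminus at 1. eapply Rle_trans. apply Rabs_triang. rewrite Rabs_Ropp. specialize (H1 H0). specialize (H2 H3). lra.
Qed.
End WithH.
Definition cons_fn (t : R) (y : nat -> R) : nat -> R :=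
  fun i => match i with O => t | S i' => y i' end.

Fixpoint rmono (bs : list nat) (x : nat -> R) : R :=
  match bs with [] => 1 | k :: bs' => x O ^ k * rmono bs' (fun i => x (S i)) end.

Fixpoint lsum (l : list nat) : nat := match l with [] => O | k :: l' => (k + lsum l')%nat end.

Section MDs.
Variable h : R.

Fixpoint MD (al : list nat) (G : (nat -> R) -> R) : R :=
  match al with
  | [] => G (fun _ => 0)
  | a :: al' => D h a (fun t => MD al' (fun y => G (cons_fn t y))) 0
  end.

Lemma MD_ext al G1 G2 : (forall y, G1 y = G2 y) -> MD al G1 = MD al G2.
Proof.
  revert G1 G2; induction al; intros G1 G2 H; simpl. auto.
  apply D_ext. intros t. apply IHal. intros; apply H.
Qed.

Lemma MD_scal al c G : MD al (fun y => c * G y) = c * MD al G.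
Proof.
  revert G; induction al; intros G; simpl. auto.
  rewrite <- D_scal. apply D_ext. intros t. apply IHal.
Qed.

Lemma MD_add al G1 G2 : MD al (fun y => G1 y + G2 y) = MD al G1 + MD al G2.
Proof.
  revert G1 G2; induction al; intros G1 G2; simpl. auto.
  rewrite <- D_add. apply D_ext. intros t. apply IHal.
Qed.

Lemma MD_zero al : MD al (fun _ => 0) = 0.
Proof.
  rewrite (MD_ext al _ (fun y => 0 * 0)) by (intros; ring). rewrite MD_scal. ring.
Qed.

Fixpoint prodD (al bs : list nat) : R :=
  match al, bs with
  | a :: al', k :: bs' => D h a (fun t => t ^ k) 0 * prodD al' bs'
  | _, _ => 1
  end.

Lemma MD_rmono al bs : length bs = length al -> MD al (rmono bs) = prodD al bs.
Proof.
  revert bs; induction al as [|a al IH]; intros bs Hl; destruct bs as [|k bs]; simpl in *; try lia.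
  - auto.
  - rewrite <- IH by lia. rewrite Rmult_comm, <- D_scal.
    apply D_ext. intros t. rewrite Rmult_comm, <- MD_scal. apply MD_ext. intros y. simpl. reflexivity.
Qed.

Lemma prodD_neq al bs : length bs = length al -> (lsum bs <= lsum al)%nat -> bs <> al ->
  prodD al bs = 0.
Proof.
  revert bs; induction al as [|a al IH]; intros bs Hl Hs Hn; destruct bs as [|k bs]; simpl in *; try lia.
  - congruence.
  - destruct (Compare_dec.lt_dec k a).
    + rewrite D_pow_lt by auto. ring.
    + destruct (Nat.eq_dec k a).
      * subst. rewrite IH by (try lia; congruence). ring.
      * rewrite IH by (try lia; intro; subst; lia). ring.
Qed.

Fixpoint factprod (al : list nat) : R :=
  match al with [] => 1 | a :: al' => INR (fact a) * factprod al' end.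

Lemma factprod_ge1 al : 1 <= factprod al.
Proof.
  induction al; simpl. lra.
  assert (1 <= INR (fact a)). { apply (le_INR 1). pose proof (lt_O_fact a). lia. }
  nra.
Qed.

Lemma prodD_eq al : prodD al al = (2 * h) ^ (lsum al) * factprod al.
Proof.
  induction al; simpl. ring. rewrite D_pow, IHal, pow_add. ring.
Qed.


Lemma MD_bound al G M : 0 <= h ->
  (forall y, (forall i, (i < length al)%nat -> Rabs (y i) <= INR (nth i al O) * h) -> Rabs (G y) <= M) ->
  Rabs (MD al G) <= 2 ^ (lsum al) * M.
Proof.
  intros Hh. revert G M; induction al as [|a al IH]; intros G M H; simpl.
  - rewrite Rmult_1_l. apply H. intros i Hi; simpl in Hi; lia.
  - rewrite pow_add, Rmult_assoc. apply D_bound; auto.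
    intros t Ht. apply IH. intros y Hy. apply H. intros [|i] Hi; simpl.
    + rewrite Rminus_0_r in Ht; auto.
    + apply Hy. simpl in Hi; lia.
Qed.
End MDs.
Lemma rmono_ext bs x y : (forall i, x i = y i) -> rmono bs x = rmono bs y.
Proof.
  revert x y; induction bs; intros x y H; simpl; auto.
  rewrite H. f_equal. apply IHbs. intros; apply H.
Qed.

Lemma Cpow_real r k : Cpow (r, 0) k = (r ^ k, 0).
Proof. induction k; simpl. reflexivity. rewrite IHk. unfold Cmul; simpl. f_equal; ring. Qed.

Lemma monomial_from_real y i bs :
  monomial_from (fun j => (y j, 0)) i bs = (rmono bs (fun j => y (i + j)%nat), 0).
Proof.
  revert i; induction bs as [|k bs IH]; intros i; simpl. reflexivity.
  rewrite Cpow_real, IH. unfold Cmul; simpl. rewrite Nat.add_0_r. f_equal; [|ring].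
  rewrite (rmono_ext bs (fun i0 => y (i + S i0)%nat) (fun j => y (S (i + j)))) by (intros; f_equal; lia). ring.
Qed.

Lemma monomial_real y bs : monomial (fun j => (y j, 0)) bs = (rmono bs y, 0).
Proof. unfold monomial. rewrite monomial_from_real. f_equal. Qed.

Definition reu (u z : Cx) : R := fst u * fst z - snd u * snd z.

Lemma hpoly_reu u a y L :
  reu u (fold_right Cadd C0 (map (fun al => Cmul (a al) (monomial (fun j => (y j, 0)) al)) L))
  = fold_right Rplus 0 (map (fun bs => reu u (a bs) * rmono bs y) L).
Proof.
  induction L as [|bs L IH]; simpl. unfold reu, C0; simpl; ring.
  rewrite <- IH. rewrite monomial_real. unfold reu, Cadd, Cmul; simpl. ring.
Qed.

Lemma reu_bound u z : fst u * fst u + snd u * snd u = 1 -> Rabs (reu u z) <= Cabs z.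
Proof.
  intros Hu. unfold Cabs. rewrite <- sqrt_Rsqr_abs. apply sqrt_le_1_alt.
  unfold Rsqr, reu.
  destruct u as [p q]; destruct z as [z1 z2]; simpl in *.
  assert (0 <= (p * z2 + q * z1) * (p * z2 + q * z1)) by apply Rle_0_sqr.
  assert (E : (p * z1 - q * z2) * (p * z1 - q * z2) + (p * z2 + q * z1) * (p * z2 + q * z1)
     = (p * p + q * q) * (z1 * z1 + z2 * z2)) by ring.
  rewrite Hu, Rmult_1_l in E. lra.
Qed.

Lemma Cabs_real r : Cabs (r, 0) = Rabs r.
Proof. unfold Cabs; simpl. rewrite Rmult_0_l, Rplus_0_r. apply sqrt_Rsqr_abs. Qed.

Lemma MI_S n m : multi_indices (S n) m =
  flat_map (fun k => map (cons k) (multi_indices n (m - k))) (seq 0 (S m)).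
Proof. reflexivity. Qed.

Lemma MI_prop n m bs : In bs (multi_indices n m) -> length bs = n /\ lsum bs = m.
Proof.
  revert m bs; induction n as [|n IH]; intros m bs H.
  - simpl in H. destruct m; simpl in H; [|contradiction]. destruct H as [H|[]]. subst; simpl; auto.
  - rewrite MI_S in H. apply in_flat_map in H. destruct H as [k [Hk H]]. apply in_seq in Hk.
    apply in_map_iff in H. destruct H as [bs' [E H]]. subst. apply IH in H.
    simpl. lia.
Qed.

Lemma MD_sum h al b L :
  MD h al (fun y => fold_right Rplus 0 (map (fun bs => b bs * rmono bs y) L))
  = fold_right Rplus 0 (map (fun bs => b bs * MD h al (rmono bs)) L).
Proof.
  induction L as [|bs L IH]; simpl. apply MD_zero.
  rewrite MD_add, MD_scal, IH. reflexivity.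
Qed.

Lemma sum_count h al b L :
  (forall bs, In bs L -> length bs = length al /\ lsum bs = lsum al) ->
  fold_right Rplus 0 (map (fun bs => b bs * MD h al (rmono bs)) L)
  = b al * prodD h al al * INR (count_occ (list_eq_dec Nat.eq_dec) L al).
Proof.
  induction L as [|bs L IH]; intros HL; simpl. ring.
  rewrite IH by (intros; apply HL; right; auto).
  destruct (HL bs (or_introl eq_refl)) as [H1 H2].
  rewrite MD_rmono by auto.
  destruct (list_eq_dec Nat.eq_dec bs al).
  - subst. rewrite S_INR. ring.
  - rewrite prodD_neq by (auto; lia). ring.
Qed.

Lemma pow_le1 x k : 0 <= x <= 1 -> x ^ k <= 1.
Proof. intros H; induction k; simpl. lra. assert (0 <= x ^ k) by (apply pow_le; lra). nra. Qed.

Lemma pow_le_self x k : 0 <= x <= 1 -> (1 <= k)%nat -> x ^ k <= x.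
Proof.
  intros H Hk. destruct k. lia. simpl. assert (x ^ k <= 1) by (apply pow_le1; auto).
  assert (0 <= x ^ k) by (apply pow_le; lra). nra.
Qed.

Lemma nth_le_lsum al i : (nth i al O <= lsum al)%nat.
Proof. revert i; induction al; intros [|i]; simpl; try lia. specialize (IHal i); lia. Qed.

Lemma sum_nth al : al <> [] ->
  sum_f_R0 (fun i => INR (nth i al O)) (pred (length al)) = INR (lsum al).
Proof.
  induction al as [|a al IH]; intros Hne. congruence.
  destruct al as [|b al'].
  - simpl. rewrite Nat.add_0_r; auto.
  - pose proof (IH ltac:(discriminate)) as IH'. simpl length in *. rewrite decomp_sum by lia.
    simpl pred in *. simpl nth. simpl nth in IH'. rewrite IH'. change (lsum (a :: b :: al')) with (a + lsum (b :: al'))%nat. rewrite plus_INR. reflexivity.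
Qed.

Lemma ball_pts isReal m al y : (1 <= m)%nat -> al <> [] -> lsum al = m ->
  (forall i, (i < length al)%nat -> Rabs (y i) <= INR (nth i al O) * / INR m) ->
  in_unit_ball isReal (length al) m (fun i => (y i, 0)).
Proof.
  intros Hm Hne Hs Hy. split.
  - intros i _. destruct isReal; simpl; auto.
  - assert (HmR : 0 < INR m) by (apply lt_0_INR; lia).
    apply Rle_trans with (sum_f_R0 (fun i => INR (nth i al O) * / INR m) (pred (length al))).
    + apply sum_Rle. intros i Hi. rewrite Cabs_real.
      assert (Hle : INR (nth i al O) <= INR m) by (apply le_INR; rewrite <- Hs; apply nth_le_lsum).
      assert (0 <= INR (nth i al O)) by apply pos_INR.
      assert (H1: 0 <= INR (nth i al O) * / INR m <= 1).
      { split. apply Rmult_le_pos; auto. left; apply Rinv_0_lt_compat; auto.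
        apply (Rmult_le_reg_r (INR m)); auto. rewrite Rmult_assoc, Rinv_l by lra. lra. }
      apply Rle_trans with ((INR (nth i al O) * / INR m) ^ m).
      * apply pow_incr. split. apply Rabs_pos. apply Hy.
        destruct al; [congruence|]. simpl in Hi |- *. lia.
      * apply pow_le_self; auto.
    + rewrite <- scal_sum. rewrite sum_nth by auto. rewrite Hs. rewrite Rinv_l by lra. lra.
Qed.
Lemma coeff_main m isReal C : (1 <= m)%nat -> INR m ^ m <= C -> coeff_bound isReal m C.
Proof.
  intros Hm HC n a N Hn _ HN al Hal.
  destruct (MI_prop _ _ _ Hal) as [Hlen Hsum].
  assert (HmR : 0 < INR m) by (apply lt_0_INR; lia).
  set (h := / INR m).
  assert (Hh : 0 < h) by (apply Rinv_0_lt_compat; auto).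
  set (z := a al).
  set (c := Cabs z).
  assert (Hc0 : 0 <= c) by apply sqrt_pos.
  assert (Hcc : c * c = fst z * fst z + snd z * snd z).
  { unfold c, Cabs. apply sqrt_sqrt. nra. }
  set (u := if Req_EM_T c 0 then (1, 0) else (fst z / c, - snd z / c)).
  assert (Hu : fst u * fst u + snd u * snd u = 1 /\ reu u z = c).
  { unfold u, reu. destruct (Req_EM_T c 0) as [E|E]; simpl.
    - split. ring. rewrite E in Hcc. nra.
    - split.
      + replace (fst z / c * (fst z / c) + - snd z / c * (- snd z / c)) with ((fst z * fst z + snd z * snd z) / (c * c)) by (field; auto).
        rewrite <- Hcc. field; auto.
      + replace (fst z / c * fst z - - snd z / c * snd z) with ((fst z * fst z + snd z * snd z) / c) by (field; auto).
        rewrite <- Hcc. field; auto. }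
  destruct Hu as [Hu1 Hu2].
  set (b := fun bs => reu u (a bs)).
  set (L := multi_indices n m).
  set (G := fun y => fold_right Rplus 0 (map (fun bs => b bs * rmono bs y) L)).
  assert (HG : forall y, (forall i, (i < length al)%nat -> Rabs (y i) <= INR (nth i al O) * h) ->
            Rabs (G y) <= N).
  { intros y Hy. unfold G, b. rewrite <- hpoly_reu.
    eapply Rle_trans. apply reu_bound; auto.
    destruct HN as [HN _]. apply HN. eexists; split; [|reflexivity].
    rewrite <- Hlen. apply ball_pts; auto. destruct al; simpl in Hlen; [lia|discriminate].
    }
  pose proof (MD_bound h al G N (Rlt_le _ _ Hh) HG) as HB.
  unfold G in HB. rewrite MD_sum, sum_count in HB.
  2:{ intros bs Hbs. apply MI_prop in Hbs. lia. }
  rewrite prodD_eq in HB. unfold b in HB. fold z in HB. rewrite Hu2, Hsum in HB.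
  pose proof (factprod_ge1 al) as HF.
  assert (Hcnt : 1 <= INR (count_occ (list_eq_dec Nat.eq_dec) L al)).
  { apply (le_INR 1). apply (count_occ_In (list_eq_dec Nat.eq_dec)) in Hal. unfold L. lia. }
  assert (H2h : (2 * h) ^ m * (INR m) ^ m = 2 ^ m).
  { rewrite <- Rpow_mult_distr. unfold h. rewrite Rmult_assoc, Rinv_l, Rmult_1_r by lra. auto. }
  assert (Hp : 0 < (2 * h) ^ m) by (apply pow_lt; lra).
  assert (Hk : c * (2 * h) ^ m <= 2 ^ m * N).
  { eapply Rle_trans; [|apply HB]. rewrite Rabs_right.
    2:{ apply Rle_ge. repeat apply Rmult_le_pos; lra. }
    assert (0 <= c * (2 * h) ^ m) by (apply Rmult_le_pos; lra).
    assert (c * (2 * h) ^ m <= c * (2 * h) ^ m * factprod al) by nra.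
    assert (0 <= c * (2 * h) ^ m * factprod al) by nra. nra. }
  assert (Hmm : 0 < INR m ^ m) by (apply pow_lt; auto).
  assert (Hcm : c <= INR m ^ m * N).
  { apply (Rmult_le_reg_r ((2 * h) ^ m)); auto.
    replace (INR m ^ m * N * (2 * h) ^ m) with (((2 * h) ^ m * INR m ^ m) * N) by ring.
    rewrite H2h. lra. }
  assert (0 <= N) by nra.
  fold z c. nra.
Qed.
Fixpoint nz (bs : list nat) : nat :=
  match bs with [] => O | k :: bs' => ((if Nat.eqb k 0 then 0 else 1) + nz bs')%nat end.
Definition pureb (bs : list nat) : bool := Nat.eqb (nz bs) 1.
Definition aP (bs : list nat) : Cx := if pureb bs then Defs.C1 else Defs.C0.

Lemma MI_0 n : multi_indices n 0 = [repeat O n].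
Proof. induction n. reflexivity. rewrite MI_S. simpl. rewrite IHn. reflexivity. Qed.

Lemma nz_pos bs : (1 <= lsum bs)%nat -> (1 <= nz bs)%nat.
Proof.
  induction bs as [|k bs IH]; simpl; intros H. lia.
  destruct (Nat.eqb_spec k 0). subst. simpl in H. specialize (IH H). lia. lia.
Qed.

Lemma nz_repeat n : nz (repeat O n) = O.
Proof. induction n; simpl; auto. Qed.

Lemma filter_flat_map {A B} (p : B -> bool) (f : A -> list B) l :
  filter p (flat_map f l) = flat_map (fun x => filter p (f x)) l.
Proof. induction l; simpl; auto. rewrite filter_app, IHl. reflexivity. Qed.

Lemma flat_map_nil {A B} (f : A -> list B) l : (forall x, In x l -> f x = []) -> flat_map f l = [].
Proof. induction l; simpl; intros H; auto. rewrite H by auto. apply IHl. intros; apply H; auto. Qed.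

Lemma filter_nil {A} (p : A -> bool) l : (forall x, In x l -> p x = false) -> filter p l = [].
Proof. induction l; simpl; intros H; auto. rewrite H by auto. apply IHl. intros; apply H; auto. Qed.

Lemma filter_cons0 l : filter pureb (map (cons O) l) = map (cons O) (filter pureb l).
Proof. induction l; simpl; auto. unfold pureb at 1. simpl. fold (pureb a). destruct (pureb a); simpl; rewrite IHl; auto. Qed.

Lemma filter_MI m n : (1 <= m)%nat ->
  filter pureb (multi_indices (S n) m) =
  map (cons O) (filter pureb (multi_indices n m)) ++ [m :: repeat O n].
Proof.
  intros Hm. rewrite MI_S, filter_flat_map. destruct m as [|m']; [lia|].
  change (seq 0 (S (S m'))) with (0%nat :: seq 1 (S m')). rewrite seq_S.
  simpl flat_map at 1. rewrite filter_cons0. f_equal.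
  rewrite flat_map_app. rewrite flat_map_nil.
  - simpl. rewrite Nat.sub_diag, MI_0. simpl.
    unfold pureb. simpl. rewrite nz_repeat. reflexivity.
  - intros k Hk. apply in_seq in Hk. destruct k as [|k]; [lia|]. apply filter_nil. intros x Hx.
    apply in_map_iff in Hx. destruct Hx as [bs [E Hbs]]. subst.
    apply MI_prop in Hbs. destruct Hbs as [_ Hs].
    assert (1 <= nz bs)%nat by (apply nz_pos; lia).
    unfold pureb; simpl. apply Nat.eqb_neq. lia.
Qed.

Lemma len_filter_MI m n : (1 <= m)%nat -> length (filter pureb (multi_indices n m)) = n.
Proof.
  intros Hm. induction n.
  - destruct m; [lia|]. reflexivity.
  - rewrite filter_MI by auto. rewrite length_app, length_map, IHn. simpl; lia.
Qed.

Lemma Cabs_C0 : Cabs Defs.C0 = 0.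
Proof. unfold Defs.C0. rewrite Cabs_real. apply Rabs_R0. Qed.
Lemma Cabs_C1 : Cabs Defs.C1 = 1.
Proof. unfold Defs.C1. rewrite Cabs_real. apply Rabs_R1. Qed.

Lemma lr_sum r L :
  fold_right Rplus 0 (map (fun bs => rpow (Cabs (aP bs)) r) L) = INR (length (filter pureb L)).
Proof.
  induction L as [|bs L IH]; simpl. auto.
  unfold aP at 1. destruct (pureb bs); simpl; rewrite IH.
  - rewrite Cabs_C1. unfold rpow. destruct (Req_EM_T 1 0). lra.
    unfold Rpower. rewrite ln_1, Rmult_0_r, exp_0. destruct (length (filter pureb L)); simpl; ring.
  - rewrite Cabs_C0. unfold rpow. destruct (Req_EM_T 0 0). ring. lra.
Qed.

Lemma Cabs_pos z : 0 <= Cabs z.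
Proof. apply sqrt_pos. Qed.

Lemma Cabs_add z w : Cabs (Cadd z w) <= Cabs z + Cabs w.
Proof.
  destruct z as [z1 z2]; destruct w as [w1 w2]. unfold Cabs, Cadd; simpl.
  set (p := sqrt (z1 * z1 + z2 * z2)). set (q := sqrt (w1 * w1 + w2 * w2)).
  assert (Hp : p * p = z1 * z1 + z2 * z2) by (apply sqrt_sqrt; nra).
  assert (Hq : q * q = w1 * w1 + w2 * w2) by (apply sqrt_sqrt; nra).
  assert (p0 : 0 <= p) by apply sqrt_pos. assert (q0 : 0 <= q) by apply sqrt_pos.
  assert (HCS : z1 * w1 + z2 * w2 <= p * q).
  { assert ((z1 * w1 + z2 * w2) * (z1 * w1 + z2 * w2) <= (p * q) * (p * q)).
    { replace ((p * q) * (p * q)) with ((p * p) * (q * q)) by ring. rewrite Hp, Hq.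
      assert (0 <= (z1 * w2 - z2 * w1) * (z1 * w2 - z2 * w1)) by apply Rle_0_sqr. nra. }
    assert (0 <= p * q) by nra. nra. }
  rewrite <- (sqrt_Rsqr (p + q)) by lra. apply sqrt_le_1_alt. unfold Rsqr. nra.
Qed.

Lemma Cabs_mul z w : Cabs (Cmul z w) = Cabs z * Cabs w.
Proof.
  destruct z as [z1 z2]; destruct w as [w1 w2]. unfold Cabs, Cmul; simpl.
  rewrite <- sqrt_mult by nra. f_equal. ring.
Qed.

Lemma Cabs_pow z k : Cabs (Cpow z k) = Cabs z ^ k.
Proof. induction k; simpl. apply Cabs_C1. rewrite Cabs_mul, IHk. auto. Qed.

Lemma Cabs_monomial_from x i bs :
  Cabs (monomial_from x i bs) = rmono bs (fun j => Cabs (x (i + j)%nat)).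
Proof.
  revert i; induction bs as [|k bs IH]; intros i; simpl. apply Cabs_C1.
  rewrite Cabs_mul, Cabs_pow, IH, Nat.add_0_r. f_equal. apply rmono_ext. intros; f_equal; f_equal; lia.
Qed.

Lemma eval_bound x L :
  Cabs (fold_right Cadd Defs.C0 (map (fun bs => Cmul (aP bs) (monomial x bs)) L))
  <= fold_right Rplus 0 (map (fun bs => rmono bs (fun j => Cabs (x j))) (filter pureb L)).
Proof.
  induction L as [|bs L IH]; simpl. rewrite Cabs_C0; lra.
  eapply Rle_trans. apply Cabs_add. rewrite Cabs_mul. unfold aP at 1.
  unfold monomial at 1. rewrite Cabs_monomial_from. simpl.
  destruct (pureb bs); simpl.
  - rewrite Cabs_C1. lra.
  - rewrite Cabs_C0. lra.
Qed.

Fixpoint sumn (n : nat) (f : nat -> R) : R :=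
  match n with O => 0 | S n' => f O + sumn n' (fun i => f (S i)) end.

Lemma sumn_sum n f : (1 <= n)%nat -> sumn n f = sum_f_R0 f (pred n).
Proof.
  revert f; induction n as [|n IH]; intros f Hn. lia.
  destruct n. simpl. ring.
  simpl sumn. rewrite (decomp_sum f (pred (S (S n)))) by (simpl; lia).
  f_equal. rewrite <- IH by lia. reflexivity.
Qed.

Lemma rmono_repeat n v : rmono (repeat O n) v = 1.
Proof. revert v; induction n; intros v; simpl; auto. rewrite IHn. ring. Qed.

Lemma pure_sum m n w : (1 <= m)%nat ->
  fold_right Rplus 0 (map (fun bs => rmono bs w) (filter pureb (multi_indices n m)))
  = sumn n (fun i => w i ^ m).
Proof.
  intros Hm. revert w; induction n; intros w.
  - destruct m; [lia|]. reflexivity.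
  - rewrite filter_MI by auto. rewrite map_app, fold_right_app. simpl.
    assert (Hr : rmono (repeat O n) (fun i => w (S i)) = 1) by apply rmono_repeat.
    rewrite Hr. rewrite <- (IHn (fun i => w (S i))).
    generalize (filter pureb (multi_indices n m)). intros l. induction l; simpl. ring.
    rewrite IHl. ring.
Qed.
Lemma part4 m isReal r : (1 <= m)%nat -> 0 < r ->
  ~ exists C : R, forall (n : nat) (a : list nat -> Cx) (N : R),
         coeffs_in_K isReal a -> is_poly_norm isReal n m a N ->
         coeff_lr_norm n m r a <= C * N.
Proof.
  intros Hm Hr [C HC].
  set (M := Rmax C 0 + 1).
  assert (HM : 0 < M) by (unfold M; pose proof (Rmax_r C 0); lra).
  set (z := Rpower M r).
  assert (Hz : 0 < z) by (unfold z, Rpower; apply exp_pos).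
  destruct (archimed_cor1 (/ z) (Rinv_0_lt_compat _ Hz)) as [n [Hn1 Hn0]].
  assert (HnR : 0 < INR n) by (apply lt_0_INR; lia).
  assert (Hzn : z < INR n).
  { destruct (Rlt_or_le z (INR n)) as [H|H]; auto.
    exfalso. assert (/ z <= / INR n) by (apply Rinv_le_contravar; auto). lra. }
  set (E := fun y => exists x, in_unit_ball isReal n m x /\ y = Cabs (hpoly_eval n m aP x)).
  assert (Hub : is_upper_bound E 1).
  { intros y [x [[_ Hx] Ey]]. subst y. unfold hpoly_eval. eapply Rle_trans. apply eval_bound.
    rewrite pure_sum by auto. rewrite sumn_sum by lia. auto. }
  assert (H0 : E (Cabs (hpoly_eval n m aP (fun _ => Defs.C0)))).
  { eexists; split; [|reflexivity]. split.
    - intros i _. destruct isReal; simpl; auto.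
    - rewrite Cabs_C0, pow_i by lia. rewrite sum_cte. lra. }
  destruct (completeness E (ex_intro _ 1 Hub) (ex_intro _ _ H0)) as [N HN].
  assert (HN1 : N <= 1) by (apply HN; auto).
  assert (HN0 : 0 <= N) by (eapply Rle_trans; [apply Cabs_pos|]; apply HN; apply H0).
  assert (Hcoef : coeffs_in_K isReal aP).
  { intros bs. unfold aP. destruct (pureb bs), isReal; simpl; auto. }
  specialize (HC n aP N Hcoef HN).
  unfold coeff_lr_norm in HC. rewrite lr_sum, len_filter_MI in HC by auto.
  unfold rpow in HC. destruct (Req_EM_T (INR n) 0) as [E0|E0]; [lra|].
  assert (Hlt : Rpower z (/ r) < Rpower (INR n) (/ r)).
  { apply Rlt_Rpower_l. apply Rinv_0_lt_compat; auto. lra. }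
  unfold z in Hlt. rewrite Rpower_mult, Rinv_r, Rpower_1 in Hlt by lra.
  assert (C * N <= Rmax C 0).
  { destruct (Rle_or_lt 0 C). rewrite Rmax_left by lra. nra.
    rewrite Rmax_right by lra. nra. }
  unfold M in Hlt. lra.
Qed.

Theorem theorem4 (m : nat) (hm : (2 <= m)%nat) :
  (forall isReal : bool, exists C : R, 1 <= C /\ coeff_bound isReal m C) /\
  coeff_bound true m (sqrt 2 ^ (m - 1) * INR m ^ m) /\
  coeff_bound false m ((2 / sqrt PI) ^ (m - 1) * INR m ^ m) /\
  (forall (isReal : bool) (r : R), 0 < r ->
     ~ exists C : R, forall (n : nat) (a : list nat -> Cx) (N : R),
         coeffs_in_K isReal a -> is_poly_norm isReal n m a N ->
         coeff_lr_norm n m r a <= C * N).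
Proof.
  assert (Hm1 : (1 <= m)%nat) by lia.
  assert (HmR : 1 <= INR m) by (apply (le_INR 1); lia).
  assert (Hmm : 1 <= INR m ^ m).
  { rewrite <- (pow1 m). apply pow_incr. lra. }
  assert (Hge : forall x, 1 <= x -> INR m ^ m <= x ^ (m - 1) * INR m ^ m).
  { intros x Hx. assert (1 <= x ^ (m - 1)) by (rewrite <- (pow1 (m - 1)); apply pow_incr; lra).
    nra. }
  split; [|split; [|split]].
  - intros isReal. exists (INR m ^ m). split; auto. apply coeff_main; auto. lra.
  - apply coeff_main; auto. apply Hge.
    rewrite <- sqrt_1. apply sqrt_le_1_alt. lra.
  - apply coeff_main; auto. apply Hge.
    assert (Hs : 0 < sqrt PI) by (apply sqrt_lt_R0; apply PI_RGT_0).
    assert (sqrt PI <= 2).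
    { rewrite <- (sqrt_Rsqr 2) by lra. apply sqrt_le_1_alt. unfold Rsqr. pose proof PI_4. lra. }
    apply (Rmult_le_reg_r (sqrt PI)); auto. unfold Rdiv. rewrite Rmult_assoc, Rinv_l by lra. lra.
  - intros isReal r Hr. apply part4; auto.
Qed.
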